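(* Let $(X,d,m)$ be a metric measure space and let $p\ge1$. Let $A\subseteq X$ be such that $m(A)=0$. Then $\mathrm{AM}_p(A,m)\le m^{+,p}(A)$.
   Context: Metric measure space: complete separable metric space with nonnegative Borel measure finite on bounded sets. Minkowski content: $m^{+,p}(A)=\liminf_{r\to0}m(\overline B_r(A)\setminus A)/r^p$ with $\overline B_r(A)=\{z:d(z,A)\le r\}$. Approximate modulus: $\mathrm{AM}_p(A,m)=\inf\liminf_j\int\rho_j^pdm$, infimum over sequences of Borel $\rho_j:X\to[0,\infty]$ with $\liminf_j\int_\gamma\rho_j\,ds\ge1$ for every continuous curve $\gamma:[0,1]\to X$ whose image meets $A$. *)

(* Defs.v *)
From HB Require Import structures.
From mathcomp Require Import all_boot all_order all_algebra.
From mathcomp Require Import all_classical all_reals all_analysis.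
From mathcomp Require Import measurable_realfun.
Set Implicit Arguments. Unset Strict Implicit. Unset Printing Implicit Defensive.
Import Order.TTheory GRing.Theory Num.Theory.
Local Open Scope classical_set_scope.
Local Open Scope ring_scope.

Section MMS.
Context {R : realType} {X : Type}.
Variable d : X -> X -> R.

Definition is_metric : Prop :=
  (forall x y, d x y = 0 <-> x = y) /\ (forall x y, d x y = d y x) /\
  (forall x y z, d x z <= d x y + d y z).

Definition metric_complete : Prop :=
  forall u : nat -> X,
    (forall e, 0 < e -> exists N, forall n k, (N <= n)%N -> (N <= k)%N -> d (u n) (u k) < e) ->
    exists x, forall e, 0 < e -> exists N, forall n, (N <= n)%N -> d (u n) x < e.

Definition metric_separable : Prop :=
  exists D : set X, countable D /\
    forall x e, 0 < e -> exists2 y, D y & d x y < e.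

Definition dopen (U : set X) : Prop :=
  forall x, U x -> exists2 e, 0 < e & forall y, d x y < e -> U y.

(** distance from a point to a set (+oo for the empty set) *)
Definition dist_set (A : set X) (z : X) : \bar R :=
  ereal_inf [set (d z a)%:E | a in A].

Definition cl_nbhd (A : set X) (r : R) : set X :=
  [set z | (dist_set A z <= r%:E)%E].

(** curves gamma : [0,1] -> X (given as functions on R; only the values on [0,1] matter) *)
Definition curve_continuous (g : R -> X) : Prop :=
  forall t, 0 <= t <= 1 -> forall e, 0 < e -> exists2 del, 0 < del &
    forall s, 0 <= s <= 1 -> `|s - t| < del -> d (g s) (g t) < e.

Definition curve_length (g : R -> X) (a b : R) : \bar R :=
  ereal_sup [set x | exists (n : nat) (t : nat -> R),
    t 0%N = a /\ t n = b /\ (forall i, (i < n)%N -> t i <= t i.+1) /\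
    x = (\sum_(i < n) d (g (t i)) (g (t i.+1)))%:E].

Definition rectifiable (g : R -> X) : Prop := (curve_length g 0 1 < +oo)%E.

(** arc-length parametrisation: gt(s) = g(u) for some u in [0,1] with
    length of g|[0,u] = s (well defined, independent of the choice of u) *)
Definition arclength_param (g : R -> X) (s : R) : X :=
  g (xget (0 : R) [set u : R | 0 <= u <= 1 /\ curve_length g 0 u = s%:E]).

End MMS.

Section LineInt.
Context {R : realType} {X : Type}.
Variable d : X -> X -> R.

Definition line_integral (g : R -> X) (rho : X -> \bar R) : \bar R :=
  (\int[@lebesgue_measure R]_(s in [set s : R | (0 <= s <= fine (curve_length d g 0 1))%R])
      rho (arclength_param d g s))%E.

Definition liminf0 (f : R -> \bar R) : \bar R :=
  ereal_sup [set ereal_inf [set f r | r in [set r | 0 < r < del]] | del in [set del : R | 0 < del]].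
End LineInt.

Section AM.
Context {R : realType} {dX : measure_display} {X : measurableType dX}.
Variables (d : X -> X -> R) (mu : {measure set X -> \bar R}) (p : R).
Local Open Scope ereal_scope.

Definition minkowski_content (A : set X) : \bar R :=
  liminf0 (fun r => mu (cl_nbhd d A r `\` A) * ((r `^ p)^-1)%:E).

Definition test_curve (A : set X) (g : R -> X) : Prop :=
  [/\ curve_continuous d g, rectifiable d g,
      (exists s t, (0 <= s <= 1)%R /\ (0 <= t <= 1)%R /\ g s <> g t) &
      exists t, (0 <= t <= 1)%R /\ A (g t)].

Definition AM_admissible (A : set X) (rho : nat -> X -> \bar R) : Prop :=
  (forall j, measurable_fun [set: X] (rho j : X -> \bar R)) /\
  (forall j x, 0 <= rho j x) /\
  (forall g, test_curve A g -> 1 <= limn_einf (fun j => line_integral d g (rho j))).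

Definition AM (A : set X) : \bar R :=
  ereal_inf [set limn_einf (fun j => \int[mu]_x (poweR (rho j x) p)) |
             rho in [set rho | AM_admissible A rho]].
End AM.

(* Main.v *)
Require Import Defs.
From HB Require Import structures.
From mathcomp Require Import all_boot all_order all_algebra.
From mathcomp Require Import all_classical all_reals all_analysis.
From mathcomp Require Import measurable_realfun.
From mathcomp Require Import lra zify ring.
Import Order.TTheory GRing.Theory Num.Theory numFieldNormedType.Exports HBNNSimple.
Local Open Scope classical_set_scope.
Local Open Scope ring_scope.
Set Implicit Arguments. Unset Strict Implicit. Unset Printing Implicit Defensive.

Section Curve.
Context {R : realType} {X : Type} (d : X -> X -> R) (g : R -> X).
Hypothesis dm : is_metric d.

Lemma d_xx x : d x x = 0.
Proof. by case: dm => h _; apply/h. Qed.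
Lemma d_sym x y : d x y = d y x.
Proof. by case: dm => _ [h _]. Qed.
Lemma d_tri x y z : d x z <= d x y + d y z.
Proof. by case: dm => _ [_ h]. Qed.
Lemma d_ge0 x y : 0 <= d x y.
Proof.
have := d_tri x y x; rewrite d_xx (d_sym y x); lra.
Qed.

Definition psum n (t : nat -> R) := \sum_(i < n) d (g (t i)) (g (t i.+1)).
Definition ispart a b n (t : nat -> R) :=
  t 0%N = a /\ t n = b /\ (forall i, (i < n)%N -> t i <= t i.+1).

Lemma psum_ge0 n t : 0 <= psum n t.
Proof. by apply: sumr_ge0 => i _; exact: d_ge0. Qed.

Notation V := (curve_length d g).

Lemma part_le_V a b n t : ispart a b n t -> ((psum n t)%:E <= V a b)%E.
Proof.
move=> [h0 [h1 h2]]; apply: ereal_sup_ubound; exists n, t; split=> //.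
Qed.

Lemma V_le a b c : (forall n t, ispart a b n t -> psum n t <= c) -> (V a b <= c%:E)%E.
Proof.
move=> h; apply: ge_ereal_sup => _ [n [t [h0 [h1 [h2 ->]]]]].
by rewrite lee_fin; apply: h.
Qed.

Definition tpart a b : nat -> R := fun i => if i is 0%N then a else b.

Lemma tpartP a b : a <= b -> ispart a b 1 (tpart a b).
Proof. by move=> ab; split => //; split => // -[|i]. Qed.

Lemma psum_tpart a b : psum 1 (tpart a b) = d (g a) (g b).
Proof. by rewrite /psum big_ord1. Qed.

Definition cpart n (t s : nat -> R) : nat -> R :=
  fun i => if (i <= n)%N then t i else s (i - n)%N.

Lemma concatP a b c n m t s : ispart a b n t -> ispart b c m s ->
  ispart a c (n + m) (cpart n t s) /\ psum (n + m) (cpart n t s) = psum n t + psum m s.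
Proof.
move=> [t0 [tn tm]] [s0 [sm smo]]; split; [split; [|split]|].
- by rewrite /cpart leq0n.
- rewrite /cpart; case: ifP => h.
    have m0 : m = 0%N by lia.
    by move: sm; rewrite m0 addn0 tn s0.
  by rewrite addKn.
- move=> i lti; rewrite /cpart.
  case: (ltnP i n) => hi.
    by rewrite (ltnW hi); apply: tm.
  case: (eqVneq i n) => [e|hin].
    subst i; rewrite leqnn subSn // subnn tn -s0; apply: smo; lia.
  have -> : (i <= n)%N = false by lia.
  rewrite subSn //; apply: smo; lia.
- rewrite /psum big_split_ord /=; congr (_ + _).
    apply: eq_bigr => i _ /=; rewrite /cpart.
    by rewrite ltnW // ltn_ord.
  apply: eq_bigr => i _ /=; rewrite /cpart.
  have -> : (n + i < n)%N = false by lia.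
  rewrite -addnS !addKn.
  case: ifP => h //.
  have i0 : (i : nat) = 0%N by lia.
  by rewrite i0 addn0 tn s0.
Qed.

Definition minpart (t : nat -> R) b : nat -> R := fun i => Order.min (t i) b.
Definition maxpart (t : nat -> R) b : nat -> R := fun i => Order.max (t i) b.

Lemma clipP p q b n t : p <= b -> b <= q -> ispart p q n t ->
  [/\ ispart p b n (minpart t b), ispart b q n (maxpart t b) &
      psum n t <= psum n (minpart t b) + psum n (maxpart t b)].
Proof.
move=> pb bq [t0 [tn tm]]; split.
- split; [|split].
  + by rewrite /minpart t0 min_l.
  + by rewrite /minpart tn min_r.
  + by move=> i /tm h; rewrite /minpart le_min2.
- split; [|split].
  + by rewrite /maxpart t0 max_r.
  + by rewrite /maxpart tn max_l.
  + by move=> i /tm h; rewrite /maxpart le_max2.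
- rewrite /psum -big_split /=; apply: ler_sum => i _.
  have h := tm i (ltn_ord i).
  rewrite /minpart /maxpart /=.
  case: (boolP (t i.+1 <= b)) => h1.
    rewrite (min_l h1) (min_l (le_trans h h1)) (max_r h1) (max_r (le_trans h h1)).
    by rewrite d_xx addr0.
  rewrite -ltNge in h1.
  case: (boolP (b <= t i)) => h2.
    rewrite (min_r h2) (min_r (ltW h1)) (max_l h2) (max_l (ltW h1)).
    by rewrite d_xx add0r.
  rewrite -ltNge in h2.
  rewrite (min_l (ltW h2)) (min_r (ltW h1)) (max_r (ltW h2)) (max_l (ltW h1)).
  exact: d_tri.
Qed.


Lemma V_ge0 a b : a <= b -> (0 <= V a b)%E.
Proof.
move=> ab; apply: le_trans (part_le_V (tpartP ab)).
by rewrite lee_fin psum_ge0.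
Qed.

Lemma V_ge_d a b : a <= b -> ((d (g a) (g b))%:E <= V a b)%E.
Proof. by move=> ab; rewrite -psum_tpart; exact: part_le_V (tpartP ab). Qed.

Lemma Vfin a b : a <= b -> (V a b < +oo)%E -> V a b = (fine (V a b))%:E.
Proof. by move=> ab h; rewrite fineK // ge0_fin_numE // V_ge0. Qed.

Lemma Vadd a b c : a <= b -> b <= c -> (V a c < +oo)%E ->
  [/\ V a b = (fine (V a b))%:E, V b c = (fine (V b c))%:E,
      V a c = (fine (V a c))%:E &
      fine (V a b) + fine (V b c) <= fine (V a c)].
Proof.
move=> ab bc hac.
have ac : a <= c by apply: le_trans bc.
have Ec := Vfin ac hac; set C := fine (V a c) in Ec *.
have key : forall n t m s, ispart a b n t -> ispart b c m s ->
    psum n t + psum m s <= C.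
  move=> n t m s P Q; have [PQ e] := concatP P Q.
  by have := part_le_V PQ; rewrite Ec lee_fin e.
have hab : (V a b <= (C - d (g b) (g c))%:E)%E.
  apply: V_le => n t P; rewrite lerBrDr -psum_tpart.
  exact: key P (tpartP bc).
have Eb : V a b = (fine (V a b))%:E.
  by apply: Vfin => //; apply: le_lt_trans hab _; rewrite ltry.
set vab := fine (V a b) in Eb *.
have hbc : (V b c <= (C - vab)%:E)%E.
  apply: V_le => m s Q; rewrite lerBrDl -lerBrDr.
  rewrite -lee_fin -Eb; apply: V_le => n t P.
  by rewrite lerBrDr; exact: key P Q.
have Ebc : V b c = (fine (V b c))%:E.
  by apply: Vfin => //; apply: le_lt_trans hbc _; rewrite ltry.
split => //.
by move: hbc; rewrite Ebc lee_fin; lra.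
Qed.


Definition ell u := fine (V 0 u).

Lemma ell_facts a b : (V 0 1 < +oo)%E -> 0 <= a -> a <= b -> b <= 1 ->
  [/\ V 0 a = (ell a)%:E, V a b = (fine (V a b))%:E,
      ell a + fine (V a b) <= ell b & d (g a) (g b) <= fine (V a b)].
Proof.
move=> h1 a0 ab b1.
have [E0b _ _ _] := Vadd (le_trans a0 ab) b1 h1.
have hb : (V 0 b < +oo)%E by rewrite E0b ltry.
have [Ea Eab _ hle] := Vadd a0 ab hb.
split => //; rewrite -lee_fin -Eab; exact: V_ge_d.
Qed.

Lemma ell0 : (V 0 1 < +oo)%E -> ell 0 = 0.
Proof.
move=> h1.
have [E00 _ _ _] := Vadd (lexx 0) ler01 h1.
have h0 : (V 0 0 < +oo)%E by rewrite E00 ltry.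
have [_ _ _ hle] := Vadd (lexx 0) (lexx 0) h0.
have := V_ge0 (lexx (0:R)); rewrite E00 lee_fin.
rewrite /ell; lra.
Qed.

Lemma ell_cont : (V 0 1 < +oo)%E -> curve_continuous d g ->
  forall u, 0 <= u <= 1 -> forall e, 0 < e -> exists2 del, 0 < del &
   forall u', 0 <= u' <= 1 -> `|u' - u| < del -> `|ell u' - ell u| < e.
Proof.
move=> h1 gc u /andP[u0 u1] e e0.
have E1 := Vfin ler01 h1; set L := fine (V 0 1) in E1.
have : ((L - e / 3)%:E < V 0 1)%E by rewrite E1 lte_fin; lra.
move=> /ereal_sup_gt [_ [n [t [t0 [tn [tm ->]]]]]].
rewrite lte_fin => hLt.
have P : ispart 0 1 n t by [].
pose eta := e / 6 / (n.+1)%:R.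
have eta0 : 0 < eta by rewrite /eta divr_gt0 // divr_gt0.
have heta : eta * (n.+1)%:R = e / 6 by rewrite /eta divfK // pnatr_eq0.
have [del del0 hdel] := gc u (introT andP (conj u0 u1)) eta eta0.
exists del => //.
have key : forall a b, 0 <= a -> a <= b -> b <= 1 -> `|a - u| < del -> `|b - u| < del ->
    ell b - ell a < e.
  move=> a b a0 ab b1 au bu.
  have [Ea _ _ _] := ell_facts h1 a0 ab b1.
  have [Eb Eb1 hb _] := ell_facts h1 (le_trans a0 ab) b1 (lexx 1).
  have [P1 Pm s1] := clipP a0 (le_trans ab b1) P.
  have [P2 P3 s2] := clipP ab b1 Pm.
  have l1 := part_le_V P1; rewrite Ea lee_fin in l1.
  have l3 := part_le_V P3; rewrite Eb1 lee_fin in l3.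
  have hx : forall x, a <= x <= b -> d (g x) (g u) < eta.
    move=> x /andP[ax xb]; apply: hdel.
      by rewrite (le_trans a0 ax) (le_trans xb b1).
    move: au bu; rewrite !ltr_norml; lra.
  have l2 : psum n (minpart (maxpart t a) b) <= n%:R * (2 * eta).
    rewrite /psum mulr_natl (_ : (2 * eta) *+ n = \sum_(i < n) (2 * eta)); last first.
      by rewrite sumr_const card_ord.
    apply: ler_sum => i _.
    have hin : forall j, a <= minpart (maxpart t a) b j <= b.
      move=> j; rewrite /minpart /maxpart /= ge_min lexx orbT andbT.
      by rewrite le_min ab le_max lexx orbT.
    apply: le_trans (d_tri _ (g u) _) _.
    rewrite (d_sym (g u)).
    have := hx _ (hin i); have := hx _ (hin i.+1); lra.
  have l4 : n%:R * (2 * eta) <= e / 3.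
    apply: le_trans (_ : (n.+1)%:R * (2 * eta) <= _).
      by apply: ler_wpM2r; [rewrite mulr_ge0 // ltW| rewrite ler_nat].
    have -> : (n.+1)%:R * (2 * eta) = e / 3.
      by rewrite /eta; field; rewrite addrC natr1 pnatr_eq0.
    by [].
  have : L - e / 3 < ell a + e / 3 + fine (V b 1).
    apply: lt_le_trans hLt _; apply: le_trans s1 _.
    rewrite -addrA lerD //; apply: le_trans s2 _.
    by rewrite lerD // (le_trans l2 l4).
  have [_ _ _ hadd] := Vadd (le_trans a0 ab) b1 h1.
  rewrite -/L -/(ell b) in hadd.
  move=> hh; lra.
move=> u' /andP[u'0 u'1] hu.
have uu : `|u - u| < del by rewrite subrr normr0.
case: (leP u u') => h.
  have k := key _ _ u0 h u'1 uu hu.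
  have [_ E hh _] := ell_facts h1 u0 h u'1.
  have := V_ge0 h; rewrite E lee_fin => hv.
  have hle : ell u <= ell u' by lra.
  by rewrite ger0_norm ?subr_ge0 //; lra.
have h' := ltW h.
have k := key _ _ u'0 h' u1 hu uu.
have [_ E hh _] := ell_facts h1 u'0 h' u1.
have := V_ge0 h'; rewrite E lee_fin => hv.
have hle : ell u' <= ell u by lra.
by rewrite distrC ger0_norm ?subr_ge0 //; lra.
Qed.


Lemma ell_ivt : (V 0 1 < +oo)%E -> curve_continuous d g ->
  forall s, 0 <= s <= fine (V 0 1) -> exists u, 0 <= u <= 1 /\ V 0 u = s%:E.
Proof.
move=> h1 gc s hs.
have hc : {within `[(0:R), 1], continuous ell}.
  apply/subspace_continuousP => x Ax.
  apply/cvgrPdist_lt => e e0.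
  have Ax' : 0 <= x <= 1 by move: Ax; rewrite /= in_itv.
  have [del del0 hdel] := ell_cont h1 gc Ax' e0.
  exists del => //= y /= hxy Ay.
  rewrite distrC; apply: hdel.
    by move: Ay; rewrite /= in_itv.
  by rewrite distrC.
have := @IVT R ell 0 1 s ler01 hc.
rewrite ell0 //.
have L0 : 0 <= ell 1 by move: hs => /andP[h h']; rewrite /ell; apply: le_trans h h'.
rewrite min_l // max_r // => /(_ hs) [c].
rewrite in_itv /= => /andP[c0 c1] ec.
exists c; split; first by rewrite c0.
have [E _ _ _] := ell_facts h1 c0 c1 (lexx 1).
by rewrite E ec.
Qed.

Lemma ell_lip u v : (V 0 1 < +oo)%E -> 0 <= u <= 1 -> 0 <= v <= 1 ->
  d (g u) (g v) <= `|ell u - ell v|.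
Proof.
move=> h1 /andP[u0 u1] /andP[v0 v1].
case: (leP u v) => h.
  have [_ _ hh hd] := ell_facts h1 u0 h v1.
  have := d_ge0 (g u) (g v) => ?.
  by rewrite distrC ger0_norm; lra.
have [_ _ hh hd] := ell_facts h1 v0 (ltW h) u1.
have := d_ge0 (g v) (g u) => ?.
by rewrite d_sym ger0_norm; lra.
Qed.

Lemma line_int_ge1 (N : set X) (r : R) t0 :
  (V 0 1 < +oo)%E -> curve_continuous d g -> 0 < r -> r <= fine (V 0 1) ->
  0 <= t0 <= 1 ->
  (forall u, 0 <= u <= 1 -> d (g u) (g t0) <= r -> N (g u)) ->
  (1 <= line_integral d g (fun x => (r^-1 * \1_N x)%:E))%E.
Proof.
move=> h1 gc r0 rL ht0 hN.
rewrite /line_integral.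
set L := fine (V 0 1) in rL *.
set D := [set s : R | 0 <= s <= L].
set F := fun s => ((r^-1) * \1_N (arclength_param d g s))%:E.
have F0 : forall s, D s -> (0 <= F s)%E.
  by move=> s _; rewrite /F lee_fin mulr_ge0 // invr_ge0 ltW.
pose s0 := ell t0.
have s0D : 0 <= s0 <= L.
  move: ht0 => /andP[t00 t01].
  have [E0 E1 hh _] := ell_facts h1 t00 t01 (lexx 1).
  have := V_ge0 t00; rewrite E0 lee_fin => ha.
  have := V_ge0 t01; rewrite E1 lee_fin => hb.
  rewrite /s0 /L -/(ell 1); apply/andP; split; lra.
pose lo := if s0 + r <= L then s0 else L - r.
have lo0 : 0 <= lo by rewrite /lo; case: ifP => _; move: s0D => /andP[? ?]; lra.
have loL : lo + r <= L by rewrite /lo; case: ifP => h; [lra|] ; lra.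
have loI : forall s, lo <= s <= lo + r -> `|s - s0| <= r.
  move=> s /andP[hs1 hs2]; rewrite ler_norml.
  move: hs1 hs2; rewrite /lo; case: ifP => h hs1 hs2.
    apply/andP; split; lra.
  move: h => /negbT; rewrite -ltNge => h.
  move: s0D => /andP[? ?]; apply/andP; split; lra.
have hF : forall s, lo <= s <= lo + r -> F s = (r^-1)%:E.
  move=> s hs.
  have sD : 0 <= s <= L.
    move: hs => /andP[? ?]; apply/andP; split; lra.
  have [u [hu Eu]] := ell_ivt h1 gc sD.
  rewrite /F /arclength_param.
  set w := xget _ _.
  have [hw Ew] : 0 <= w <= 1 /\ V 0 w = s%:E.
    by apply: (xgetPex 0 (P := [set u : R | 0 <= u <= 1 /\ V 0 u = s%:E])); exists u.
  rewrite indicE mem_set ?mulr1 //.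
  apply: hN => //.
  apply: le_trans (ell_lip h1 hw ht0) _.
  by rewrite /ell Ew /= -/(ell t0) -/s0; apply: loI.
have mI : measurable (`[lo, lo + r]%classic : set (measurableTypeR R)) by exact: measurable_itv.
have k0 : 0 <= r^-1 by rewrite invr_ge0 ltW.
pose h : {nnsfun measurableTypeR R >-> R} := scale_nnsfun (indic_nnsfun R mI) k0.
have hs : sintegral (@lebesgue_measure R) h = 1%E.
  rewrite sintegralrM /=.
  rewrite (_ : sintegral _ (indic_nnsfun R mI) = lebesgue_measure (`[lo, lo + r]%classic : set (measurableTypeR R))); last exact: sintegral_indic.
  rewrite lebesgue_measure_itv /= lte_fin ltrDl r0 -EFinD -EFinM.
  by rewrite addrAC subrr add0r mulVf // gt_eqF.
rewrite -hs ge0_integralE //.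
apply: ereal_sup_ubound; exists h => // x.
have -> : h x = r^-1 * \1_(`[lo, lo + r]%classic : set R) x by [].
rewrite indicE.
case: (boolP (x \in (`[lo, lo + r]%classic : set R))) => hxI; last first.
  rewrite mulr0; rewrite /patch; case: ifP => // xD.
  by apply: F0; move: xD; rewrite inE.
have hxI' : lo <= x <= lo + r by move: hxI; rewrite inE /= in_itv.
have xD : x \in D.
  by rewrite inE /D /=; move: hxI' => /andP[? ?]; apply/andP; split; lra.
rewrite /patch xD mulr1.
by have := hF x hxI'; rewrite /F => ->.
Qed.


Lemma ell_range u : (V 0 1 < +oo)%E -> 0 <= u <= 1 -> 0 <= ell u <= fine (V 0 1).
Proof.
move=> h1 /andP[u0 u1].
have [E0 E1 hh _] := ell_facts h1 u0 u1 (lexx 1).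
have := V_ge0 u0; rewrite E0 lee_fin => ha.
have := V_ge0 u1; rewrite E1 lee_fin => hb.
rewrite -/(ell 1); apply/andP; split; lra.
Qed.

Lemma L_pos s t : (V 0 1 < +oo)%E -> 0 <= s <= 1 -> 0 <= t <= 1 -> g s <> g t ->
  0 < fine (V 0 1).
Proof.
move=> h1 hs ht gst.
have dpos : 0 < d (g s) (g t).
  rewrite lt_neqAle d_ge0 andbT eq_sym; apply/eqP => h0.
  by apply: gst; case: dm => hd _; apply/hd.
have := ell_lip h1 hs ht.
have := ell_range h1 hs; have := ell_range h1 ht.
move=> /andP[a1 a2] /andP[b1 b2] hn.
have hb : `|ell s - ell t| <= fine (V 0 1).
  clear -a1 a2 b1 b2; rewrite ler_norml; apply/andP; split; lra.
by apply: lt_le_trans dpos (le_trans hn hb).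
Qed.

End Curve.

Section Aux.
Context {R : realType}.
Local Open Scope ereal_scope.

Lemma limn_einf_le_cst (u : (\bar R)^nat) c : (forall n, u n <= c) -> limn_einf u <= c.
Proof.
move=> h; rewrite limn_einf_lim; apply: lime_le; first exact: is_cvg_einfs.
apply: nearW => n; apply: le_trans (h n).
by apply: ereal_inf_lbound; exists n => /=.
Qed.

Lemma limn_einf_ge_ev (u : (\bar R)^nat) c N :
  (forall n, (N <= n)%N -> c <= u n) -> c <= limn_einf u.
Proof.
move=> h; rewrite limn_einf_lim; apply: lime_ge; first exact: is_cvg_einfs.
exists N => // n /= Nn; apply: le_ereal_inf_tmp => _ [k /= nk <-].
by apply: h; exact: leq_trans Nn nk.
Qed.

Lemma powR_inv (r p : R) : (0 < r)%R -> ((r^-1) `^ p = (r `^ p)^-1)%R.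
Proof.
move=> r0.
have h : (r^-1 `^ p * r `^ p = 1)%R.
  by rewrite -powRM ?invr_ge0 ?ltW // mulVf ?gt_eqF // powR1.
have hp : (r `^ p != 0)%R by rewrite gt_eqF // powR_gt0.
by apply: (mulIf hp); rewrite h mulVf.
Qed.

End Aux.

Unset Implicit Arguments.

Theorem lemma3p16 (R : realType) (dX : measure_display) (X : measurableType dX)
  (d : X -> X -> R) (mu : {measure set X -> \bar R}) (p : R) (A : set X) :
  is_metric d -> metric_complete d -> metric_separable d ->
  (@measurable _ X) = <<s dopen d>> ->
  (forall (x : X) (r : R), (mu [set y | (d x y < r)%R] < +oo)%E) ->
  1 <= p ->
  measurable A -> mu A = 0%E ->
  (AM d mu p A <= minkowski_content d mu p A)%E.
Proof.
move=> dm _ _ hmeas _ p1 mA muA.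
have p0 : p != 0 by rewrite gt_eqF // (lt_le_trans ltr01 p1).
pose f := fun r : R => (mu (cl_nbhd d A r `\` A) * ((r `^ p)^-1)%:E)%E.
have f0 : forall r, (0 <= f r)%E.
  by move=> r; rewrite /f mule_ge0 // lee_fin invr_ge0 powR_ge0.
have M0 : (0 <= minkowski_content d mu p A)%E.
  rewrite /minkowski_content /liminf0.
  have hI : (0 <= ereal_inf [set f r | r in [set r : R | (0 < r < 1)%R]])%E.
    by apply: le_ereal_inf_tmp => _ [r _ <-].
  apply: le_trans hI _.
  by apply: ereal_sup_ubound; exists 1 => //=.
case E: (minkowski_content d mu p A) M0 => [m| |] M0; last 2 first.
- by rewrite leey.
- by move: M0; rewrite leeNy_eq.
apply/lee_addgt0Pr => e e0.
have hr : forall j : nat, exists r : R,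
    (0 < r < (j.+1%:R)^-1) /\ (f r < (m + e)%:E)%E.
  move=> j.
  have : (ereal_inf [set f r | r in [set r : R | (0 < r < (j.+1%:R)^-1)%R]] < (m + e)%:E)%E.
    apply: le_lt_trans (_ : _ <= m%:E)%E _; last by rewrite lte_fin ltrDl.
    rewrite -E; apply: ereal_sup_ubound; exists (j.+1%:R)^-1 => //=.
  by move=> /ereal_inf_lt [_ [r hr <-]] hlt; exists r.
have [rr hrr] := choice hr.
pose N j := cl_nbhd d A (rr j).
pose rho := fun j x => ((rr j)^-1 * \1_(N j) x)%:E.
have rr0 : forall j, 0 < rr j by move=> j; have [/andP[] ] := hrr j.
have mN : forall j, measurable (N j).
  move=> j; rewrite -(setCK (N j)); apply: measurableC; rewrite hmeas.
  apply: sub_gen_smallest => z /= hz.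
  have hz' : ((rr j)%:E < dist_set d A z)%E by rewrite ltNge; apply/negP.
  have [q rq qd] : exists2 q, rr j < q & (q%:E <= dist_set d A z)%E.
    move: hz'; case: (dist_set d A z) => [D | | ] hz'.
    + by exists D => //; rewrite -lte_fin.
    + by exists (rr j + 1); [rewrite ltrDl | rewrite leey].
    + by move: hz'; rewrite ltNge leNye.
  exists (q - rr j); first by rewrite subr_gt0.
  move=> y hy /= hyN.
  have : ((q - d z y)%:E <= dist_set d A y)%E.
    apply: le_ereal_inf_tmp => _ [a Aa <-].
    have : (q%:E <= (d z a)%:E)%E.
      by apply: le_trans qd _; apply: ereal_inf_lbound; exists a.
    rewrite !lee_fin => hqa; have := d_tri dm z y a; lra.
  move=> h; have := le_trans h hyN; rewrite lee_fin; lra.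
have AN : forall j, A `<=` N j.
  move=> j x Ax; rewrite /N /cl_nbhd /=.
  apply: le_trans (_ : _ <= (d x x)%:E)%E _.
    by apply: ereal_inf_lbound; exists x.
  by rewrite d_xx // lee_fin ltW.
apply: le_trans (_ : limn_einf (fun j => \int[mu]_x poweR (rho j x) p) <= _)%E.
  apply: ereal_inf_lbound; exists rho => //.
  split; [|split].
  - move=> j; apply/measurable_EFinP; apply: measurable_funM => //.
  - by move=> j x; rewrite /rho lee_fin indicE mulr_ge0 // invr_ge0 ltW.
  move=> g [gc grect [s [t [hs [ht gst]]]] [t0 [ht0 At0]]].
  have L0 := L_pos dm grect hs ht gst.
  set L := fine (curve_length d g 0 1) in L0.
  have [N0 hN0] : exists N0 : nat, L^-1 < N0%:R.
    by exists (Num.Def.trunc L^-1).+1; exact: truncnS_gt.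
  apply: (@limn_einf_ge_ev R _ 1 N0) => n Nn.
  have [/andP[r0 rlt] _] := hrr n.
  have rL : rr n <= L.
    apply/ltW/(lt_trans rlt).
    rewrite -(invrK L) ltf_pV2 ?posrE ?invr_gt0 ?ltr0n //.
    by apply: lt_le_trans hN0 _; rewrite ler_nat; lia.
  apply: (line_int_ge1 dm (N := N n) (t0 := t0) grect gc r0 rL ht0).
  move=> u hu hd; rewrite /N /cl_nbhd /=.
  apply: le_trans (_ : _ <= (d (g u) (g t0))%:E)%E _.
    by apply: ereal_inf_lbound; exists (g t0).
  by rewrite lee_fin.
apply: limn_einf_le_cst => j.
have -> : (fun x => poweR (rho j x) p) = fun x => (((rr j)^-1 `^ p) * \1_(N j) x)%:E.
  apply: funext => x; rewrite /rho poweR_EFin indicE.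
  by case: (x \in N j) => /=; rewrite ?mulr1 ?mulr0 ?powR0.
rewrite (integralZl_indic _ (fun _ => N j)) //; last first.
  by rewrite ltNge powR_ge0.
have hN : mu (N j) = mu (N j `\` A).
  by rewrite -{1}(setDUK (AN j)) setUC measureU0 //; exact: measurableD.
rewrite integral_indic // setIT hN -EFinD.
rewrite powR_inv // muleC.
by have [_ /ltW] := hrr j.
Qed.
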